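(* Let $\mathcal{T}=(V,A,E,f,q,v_0)$ be a decorated rooted tree and let $v,w\in V$ be such that $v<w$ or $w<v$. If $\mathcal{T}$ has negative determinants then $\det(\gamma_{v,w})<0$; if $\mathcal{T}$ has positive determinants then $\det(\gamma_{v,w})>0$.
   Context: A graph is a pair $(X_0,X_1)$ of finite sets such that each element of $X_1$ (an edge) is a $2$-element subset of $X_0$; elements of $X_0$ are cells. A path is a tuple $(x_0,\dots,x_n)$ ($n\ge0$) of cells with $\{x_i,x_{i+1}\}$ an edge for each $i<n$, these edges pairwise distinct; a cell/edge is in the path if it is some $x_i$ / some $\{x_i,x_{i+1}\}$. The graph is a tree if any two cells $x,y$ are joined by a unique path $\gamma_{x,y}$. A decorated tree is $(V,A,E,f,q)$ with $V$ (vertices), $A$ (arrows) finite disjoint sets, $(V\cup A,E)$ a tree, every arrow contained in exactly one edge, $f:A\to\mathbb{Z}$, $q(e,x)\in\mathbb{Z}$ for each $e\in E$, $x\in e$, with $q(e,\alpha)=1$ for $\alpha\in A$, and for each $v\in V$ and distinct edges $e,e'\ni v$, $\gcd(q(e,v),q(e',v))=1$. For $x\in V\cup A$, $e\ni x$: $Q(e,x)=\prod q(e',x)$ over edges $e'\ne e$ containing $x$ (empty product $=1$); for an edge $e=\{x,y\}$, $\det(e)=q(e,x)q(e,y)-Q(e,x)Q(e,y)$. For a path $\gamma=(x_0,\dots,x_n)$ with $n>0$: $q(\gamma,x_0)=q(\{x_0,x_1\},x_0)$, $q(\gamma,x_n)=q(\{x_{n-1},x_n\},x_n)$; for a cell $u$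 of $\gamma$, $Q(\gamma,u)=\prod q(\varepsilon,u)$ over edges $\varepsilon\ni u$ not in $\gamma$; $Q^*(\gamma)=\prod_{0<i<n}Q(\gamma,x_i)$; and $\det(\gamma)=q(\gamma,x_0)q(\gamma,x_n)-Q^*(\gamma)^2Q(\gamma,x_0)Q(\gamma,x_n)$. A root of $(V,A,E,f,q)$ is a vertex $v_0$ with $q(e,v_0)=1$ for every edge $e\ni v_0$ such that for every $v\in V\setminus\{v_0\}$, all edges $e\ni v$ not in $\gamma_{v_0,v}$ satisfy $q(e,v)\ge1$ and at most one of them satisfies $q(e,v)\ne1$. A decorated rooted tree is $(V,A,E,f,q,v_0)$ with $v_0$ a root. For distinct $x,y\in V\cup A$, $x<y$ means $x$ is in $\gamma_{v_0,y}$. $\mathcal{T}$ has negative (resp. positive) determinants if $\det(e)<0$ (resp. $>0$) for every edge $e=\{x,y\}$ with $x,y\in V$. *)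

(* Defs.v *)
From HB Require Import structures.
From mathcomp Require Import all_boot all_order all_algebra.
Set Implicit Arguments. Unset Strict Implicit. Unset Printing Implicit Defensive.
Import Order.TTheory GRing.Theory Num.Theory.
Local Open Scope ring_scope.

(* Cells are the elements of a finite type T; edges are 2-element subsets of T.
   A path (x_0,...,x_n) is a nonempty sequence of cells. *)
Section DecoratedTrees.
Variable T : finType.
Variable E : {set {set T}}.

Definition path_edges (p : seq T) : seq {set T} :=
  [seq [set xy.1; xy.2] | xy <- zip p (behead p)].

Definition is_path (p : seq T) : Prop :=
  p <> [::] /\ all (fun e => e \in E) (path_edges p) /\ uniq (path_edges p).

Definition path_between (x y : T) (p : seq T) : Prop :=
  is_path p /\ head x p = x /\ last x p = y.

Definition is_tree : Prop :=
  forall x y : T, exists! p : seq T, path_between x y p.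

Variable q : {set T} -> T -> int.

Definition Qe (e : {set T}) (x : T) : int :=
  \prod_(e' in E | (x \in e') && (e' != e)) q e' x.

Definition det_edge (x y : T) : int :=
  q [set x; y] x * q [set x; y] y - Qe [set x; y] x * Qe [set x; y] y.

Definition Qpath (p : seq T) (u : T) : int :=
  \prod_(e in E | (u \in e) && (e \notin path_edges p)) q e u.

Definition interior (p : seq T) : seq T := take (size p - 2)%N (drop 1 p).

Definition Qstar (p : seq T) : int := \prod_(u <- interior p) Qpath p u.

Definition det_path (x0 : T) (p : seq T) : int :=
  let n := (size p).-1 in
  let a := nth x0 p 0 in
  let b := nth x0 p n in
  q [set a; nth x0 p 1] a * q [set nth x0 p n.-1; b] b
  - Qstar p ^+ 2 * Qpath p a * Qpath p b.

Variables (V A : {set T}) (f : T -> int).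

Definition decorated_tree : Prop :=
  [disjoint V & A] /\ V :|: A = setT /\
      (forall e, e \in E -> #|e| = 2%N) /\
      is_tree /\
      (forall a, a \in A -> #|[set e in E | a \in e]| = 1%N) /\
      (forall e a, e \in E -> a \in A -> a \in e -> q e a = 1) /\
      (forall v e e', v \in V -> e \in E -> e' \in E -> v \in e -> v \in e' ->
         e != e' -> coprimez (q e v) (q e' v)).

Definition is_root (v0 : T) : Prop :=
  [/\ v0 \in V,
      (forall e, e \in E -> v0 \in e -> q e v0 = 1) &
      (forall v, v \in V -> v != v0 -> forall p, path_between v0 v p ->
         (forall e, e \in E -> v \in e -> e \notin path_edges p -> 1 <= q e v) /\
         (#|[set e in E | (v \in e) && (e \notin path_edges p) && (q e v != 1)]|
            <= 1)%N)].

Definition decorated_rooted_tree (v0 : T) : Prop :=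
  decorated_tree /\ is_root v0.

Definition tree_lt (v0 x y : T) : Prop :=
  x != y /\ forall p, path_between v0 y p -> x \in p.

Definition negative_determinants : Prop :=
  forall x y, x \in V -> y \in V -> [set x; y] \in E -> det_edge x y < 0.

Definition positive_determinants : Prop :=
  forall x y, x \in V -> y \in V -> [set x; y] \in E -> det_edge x y > 0.

End DecoratedTrees.

(* Main.v *)
Require Import Defs.
From HB Require Import structures.
From mathcomp Require Import all_boot all_order all_algebra.
From mathcomp Require Import zify ring lra.
Set Implicit Arguments. Unset Strict Implicit. Unset Printing Implicit Defensive.
Import Order.TTheory GRing.Theory Num.Theory.
Local Open Scope ring_scope.

Lemma arith (n : nat) (al be M : nat -> int) (P : int) :
 (0 < n)%N ->
 (forall j, (j < n)%N -> 0 < al j) ->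
 (forall k, (0 < k <= n)%N -> 0 < M k) ->
 (forall j, (j < n)%N -> al j * be j - (if j == 0%N then P else be j.-1 * M j) *
     (if j.+1 == n then M n else al j.+1 * M j.+1) < 0) ->
 al 0%N * be n.-1 - (\prod_(1 <= k < n) M k)^+2 * P * M n < 0.
Proof.
move=> n0 hal hM hd.
pose U j := if j.+1 == n then M n else al j.+1 * M j.+1.
have hU : forall j, (j < n)%N -> 0 < U j.
  move=> j jn; rewrite /U; case: eqP => [_|/eqP ne]; first by apply: hM; rewrite n0 leqnn.
  apply: mulr_gt0; [apply: hal| apply: hM]; lia.
suff C : forall m, (0 < m <= n)%N ->
   al 0%N * be m.-1 - (\prod_(1 <= k < m) M k)^+2 * P * U m.-1 < 0.
  have := C n; rewrite n0 leqnn /U prednK // eqxx; exact.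
elim=> [//|m IH] /andP[_ mn].
case: m IH mn => [|m] IH mn.
  by rewrite big_geq // expr1n mul1r; have := hd 0%N n0.
have h1 := IH ltac:(lia); rewrite /= big_nat_recr //=; simpl in h1.
have h2 := hd m.+1 mn; rewrite /= -/(U m.+1) in h2.
have hm : U m = al m.+1 * M m.+1 by rewrite /U; case: eqP => //; lia.
rewrite hm in h1.
have a0 := hal 0%N n0. have am := hal m.+1 mn.
have Mm : 0 < M m.+1 by apply: hM; lia.
have Um := hU m.+1 mn.
set X := (\prod_(1 <= k < m.+1) M k).
set b1 := be m in h1 h2 *. set b2 := be m.+1 in h2 *.
set a0' := al 0%N in h1 a0 *. set am' := al m.+1 in h1 h2 am *.
set Mm' := M m.+1 in h1 h2 Mm *. set Um' := U m.+1 in h2 Um *.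
have s1 : a0' * (am' * b2) < a0' * (b1 * Mm' * Um') by nia.
have s2 : (a0' * b1) * (Mm' * Um') < (X ^+ 2 * P * (am' * Mm')) * (Mm' * Um').
  have hp : 0 < Mm' * Um' by nia.
  by rewrite ltr_pM2r // -subr_lt0.
have : am' * (a0' * b2) < am' * ((X * Mm') ^+ 2 * P * Um') by nia.
nia.
Qed.

Section Paths.
Variable T : finType.
Variable E : {set {set T}}.

Lemma pe_nil : path_edges [::] = [::] :> seq {set T}. Proof. by []. Qed.
Lemma pe_one (x : T) : path_edges [:: x] = [::]. Proof. by []. Qed.
Lemma pe_cons2 (x y : T) s : path_edges [:: x, y & s] = [set x; y] :: path_edges (y :: s).
Proof. by []. Qed.

Lemma pe_cat (x : T) s t :
  path_edges (x :: s ++ t) = path_edges (x :: s) ++ path_edges (last x s :: t).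
Proof.
elim: s x => [|y s IH] x //=.
by move: (IH y); rewrite /path_edges /= => ->.
Qed.

Lemma pe_nth (x0 : T) p :
  path_edges p = [seq [set nth x0 p j; nth x0 p j.+1] | j <- iota 0 (size p).-1].
Proof.
elim: p => [//|x [|y s] IH] //.
rewrite pe_cons2 IH /=.
congr (_ :: _).
by rewrite -[in RHS](addn0 1%N) iotaDl -map_comp.
Qed.

Lemma mem_pe (x0 : T) p e :
  (e \in path_edges p) = [exists j : 'I_(size p).-1, e == [set nth x0 p j; nth x0 p j.+1]].
Proof.
rewrite (pe_nth x0); apply/mapP/existsP => [[j]|[j /eqP ->]].
  rewrite mem_iota add0n => /andP[_ jn] ->.
  by exists (Ordinal jn).
by exists (nat_of_ord j) => //; rewrite mem_iota add0n ltn_ord.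
Qed.

Lemma pe_endpoint p e (u : T) : e \in path_edges p -> u \in e -> u \in p.
Proof.
rewrite (mem_pe u) => /existsP[[k hk] /= /eqP ->]; rewrite !inE => /orP[]/eqP ->;
  apply: mem_nth; move: hk; case: (size p) => [//|m] /=; lia.
Qed.

Lemma is_path1 (x : T) : is_path E [:: x].
Proof. by split. Qed.

Lemma is_path_cat (x : T) s t : is_path E (x :: s ++ t) ->
  is_path E (x :: s) /\ is_path E (last x s :: t).
Proof.
case=> _ []; rewrite pe_cat all_cat cat_uniq => /andP[a1 a2] /and3P[u1 _ u2].
by split; split.
Qed.

Lemma pb_cat (x y : T) s t : path_between E x y (x :: s ++ t) ->
  path_between E x (last x s) (x :: s) /\ path_between E (last x s) y (last x s :: t).
Proof.
case=> /is_path_cat [h1 h2] [_ hl]; split; split => //=.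
by rewrite -hl /= last_cat.
Qed.

Lemma tree_uniq (x y : T) p1 p2 : is_tree E ->
  path_between E x y p1 -> path_between E x y p2 -> p1 = p2.
Proof.
move=> /(_ x y) [p [_ hp]] h1 h2.
by rewrite -(hp _ h1) -(hp _ h2).
Qed.

Lemma path_uniq p : is_tree E -> is_path E p -> uniq p.
Proof.
move=> tr; elim: p => [//|x p IH] hp /=.
apply/andP; split.
  apply/negP => xp.
  case/path.splitP: xp hp => p1 p2.
  move=> /is_path_cat [h1 _].
  have e := @tree_uniq x x _ _ tr (conj h1 (conj erefl (last_rcons _ _ _))) (conj (is_path1 x) (conj erefl erefl)).
  by move: (congr1 size e); rewrite /= size_rcons.
case: p IH hp => [//|y p] IH hp.
apply: IH.
by have /= [_ h] := @is_path_cat x [:: y] p hp.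
Qed.


Lemma nth_in_edge (x0 : T) p i j : uniq p -> (i < size p)%N -> (j.+1 < size p)%N ->
  (nth x0 p i \in [set nth x0 p j; nth x0 p j.+1]) = (i == j) || (i == j.+1).
Proof.
move=> up ip jp; rewrite !inE !nth_uniq //; lia.
Qed.

Lemma edge_at (x0 : T) p k (e : {set T}) : uniq p -> (k < size p)%N -> nth x0 p k \in e ->
  (e \in path_edges p) =
  ((0 < k)%N && (e == [set nth x0 p k.-1; nth x0 p k])) ||
  ((k.+1 < size p)%N && (e == [set nth x0 p k; nth x0 p k.+1])).
Proof.
move=> up kp ue; rewrite (mem_pe x0); apply/existsP/idP.
  case=> [[j hj]] /= /eqP ee; move: ue; rewrite ee nth_in_edge //; last first.
    by set n := size p in hj *; lia.
  case/orP=> /eqP ek; subst k; apply/orP; [right|left].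
    by rewrite eqxx andbT; set n := size p in hj *; lia.
  by rewrite /= eqxx.
case/orP=> /andP[h /eqP ->].
  have hj : (k.-1 < (size p).-1)%N by lia.
  by exists (Ordinal hj); rewrite /= prednK.
have hj : (k < (size p).-1)%N by lia.
by exists (Ordinal hj).
Qed.

Lemma pe_rev p : path_edges (rev p) = rev (path_edges p) :> seq {set T}.
Proof.
case: p => [//|x0 p'].
set p := x0 :: p'.
apply: (@eq_from_nth _ set0).
  by rewrite size_rev !(pe_nth x0) !size_map !size_iota size_rev.
rewrite (pe_nth x0) size_map size_iota size_rev => i hi.
rewrite nth_rev; last by rewrite (pe_nth x0) size_map size_iota.
rewrite !(pe_nth x0) size_map size_iota ?size_rev.
rewrite (nth_map 0%N set0); last by rewrite size_iota.
rewrite (nth_map 0%N set0); last by rewrite size_iota; lia.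
rewrite !nth_iota //; last lia.
rewrite !add0n !nth_rev; try lia.
rewrite setUC; congr [set nth x0 p _; nth x0 p _]; lia.
Qed.


Lemma pb_rev (x y : T) p : path_between E x y p -> path_between E y x (rev p).
Proof.
case: p => [[[]]//|a s] [[_ [ha hu]] [/= hx hy]].
split; [split; [|split]|split].
- by case/lastP: s {hy ha hu} => [|s c]; rewrite ?rev_cons ?rev_rcons.
- by rewrite pe_rev all_rev.
- by rewrite pe_rev rev_uniq.
- by rewrite lastI rev_rcons /= hy.
- by rewrite rev_cons last_rcons hx.
Qed.

Lemma head_rev (a : T) s : head a (rev s) = last a s.
Proof. by case/lastP: s => [|s c] //; rewrite rev_rcons last_rcons. Qed.

Lemma last_rev (a : T) s : last a (rev s) = head a s.
Proof. by case: s => [|c s] //; rewrite rev_cons last_rcons. Qed.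

Variable q : {set T} -> T -> int.

Lemma interior_form (a b : T) s : interior (a :: rcons s b) = s.
Proof.
rewrite /interior /= drop0 size_rcons.
have -> : ((size s).+2 - 2 = size s)%N by lia. by rewrite -cats1 take_size_cat.
Qed.

Lemma det_path_form (x0 a b : T) s :
  det_path E q x0 (a :: rcons s b) =
  q [set a; head b s] a * q [set last a s; b] b
  - Qstar E q (a :: rcons s b) ^+ 2 * Qpath E q (a :: rcons s b) a
    * Qpath E q (a :: rcons s b) b.
Proof.
rewrite /det_path /= size_rcons /=.
have -> : nth x0 (rcons s b) 0 = head b s by case: s.
have -> : nth x0 (rcons s b) (size s) = b by rewrite nth_rcons ltnn eqxx.
have -> : nth x0 (a :: rcons s b) (size s) = last a s.
  by rewrite -rcons_cons nth_rcons /= ltnSn (last_nth x0).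
by [].
Qed.

Lemma Qpath_rev p u : Qpath E q (rev p) u = Qpath E q p u.
Proof. by apply: eq_bigl => e; rewrite pe_rev mem_rev. Qed.

Lemma det_path_rev (x0 y0 a b : T) s :
  det_path E q x0 (a :: rcons s b) = det_path E q y0 (rev (a :: rcons s b)).
Proof.
have hr : rev (a :: rcons s b) = b :: rcons (rev s) a by rewrite rev_cons rev_rcons.
rewrite hr !det_path_form /Qstar !interior_form head_rev last_rev -hr !Qpath_rev big_rev.
rewrite (setUC [set b]) (setUC [set head b s]) .
under [X in _ = _ - X ^+ 2 * _ * _]eq_bigr => u _ do rewrite Qpath_rev.
ring.
Qed.

Lemma Qe_L1 (e0 : {set T}) (u : T) (s : seq {set T}) :
  (forall e, e \in E -> u \in e -> (e \in s) = (e == e0)) ->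
  Qe E q e0 u = \prod_(e in E | (u \in e) && (e \notin s)) q e u.
Proof.
move=> h; apply: eq_bigl => e.
case eE: (e \in E) => //=; case ue: (u \in e) => //=.
by rewrite h.
Qed.

Lemma Qe_L2 (e0 e1 : {set T}) (u : T) (s : seq {set T}) :
  e1 \in E -> u \in e1 -> e1 != e0 ->
  (forall e, e \in E -> u \in e -> (e \in s) = (e == e0) || (e == e1)) ->
  Qe E q e0 u = q e1 u * \prod_(e in E | (u \in e) && (e \notin s)) q e u.
Proof.
move=> e1E ue1 ne h; rewrite /Qe (bigD1 e1) /=; last by rewrite e1E ue1 ne.
congr (_ * _); apply: eq_bigl => e.
case eE: (e \in E) => //=; case ue: (u \in e) => //=.
by rewrite h // negb_or.
Qed.

End Paths.

Ltac slia :=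
  repeat match goal with
  | H : ?P |- _ =>
    lazymatch P with
    | is_true (_ <= _)%N => fail
    | is_true (_ && _) => fail
    | is_true (~~ _) => fail
    | is_true (_ == _) => fail
    | (_ = _ :> nat) => fail
    | _ => clear H
    end
  end; lia.

Section Main.
Variable T : finType.
Variables (V A : {set T}) (E : {set {set T}}) (q : {set T} -> T -> int) (v0 : T).

Lemma main_lt (v w : T) p :
  decorated_rooted_tree E q V A v0 -> v \in V -> w \in V -> tree_lt E v0 v w ->
  path_between E v w p ->
  (negative_determinants E q V -> det_path E q v p < 0) /\
  (positive_determinants E q V -> det_path E q v p > 0).
Proof.
move=> [[dVA [VAT [e2 [tr [arr [qa cop]]]]]] [v0V qv0 rootc]] vV wV [vw vg] pb.
have [g [gpb _]] := tr v0 w.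
have ving := vg g gpb.
case: g gpb ving => [|a0 g'] gpb ving; first by case: gpb => [[]].
have a0v0 : a0 = v0 by case: gpb => _ [].
subst a0.
have [al [s2 [eg lal]]] : exists al s2, g' = al ++ s2 /\ last v0 al = v.
  case: (eqVneq v v0) => [->|nv]; first by exists [::], g'.
  move: ving; rewrite inE (negbTE nv) /= => /path.splitP [p1 p2].
  by exists (rcons p1 v), p2; rewrite last_rcons.
subst g'.
have [pb1 pb2] := pb_cat gpb. rewrite lal in pb2.
have ep : p = v :: s2 := tree_uniq tr pb pb2.
subst p.
have ug : uniq (v0 :: al ++ s2) := path_uniq tr gpb.1.
have up : uniq (v :: s2) := path_uniq tr pb.1.
have disj : forall y, y \in s2 -> y \notin v0 :: al.
  move: ug; rewrite -cat_cons cat_uniq => /and3P[_ h _] y ys.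
  apply/negP => ya; move/negP: h; apply; apply/hasP; by exists y.
set n := size s2.
have n0 : (0 < n)%N.
  rewrite /n lt0n size_eq0; apply/eqP => s0.
  by move: pb; rewrite s0 => [[_ [_ /= h]]]; rewrite h eqxx in vw.
have hsz : size (v :: s2) = n.+1 by [].
pose x k := nth v (v :: s2) k.
have lastx : forall k, (k <= n)%N -> last v (take k s2) = x k.
  move=> k kn; rewrite (last_nth v) size_takel //.
  by case: k kn => [//|k] kn /=; rewrite nth_take.
have gpk : forall k, (k <= n)%N ->
    path_between E v0 (x k) (v0 :: al ++ take k s2) /\
    path_edges (v0 :: al ++ take k s2) = path_edges (v0 :: al) ++ path_edges (v :: take k s2).
  move=> k kn.
  have e : v0 :: al ++ s2 = v0 :: (al ++ take k s2) ++ drop k s2 by rewrite -catA cat_take_drop.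
  move: gpb; rewrite e => /pb_cat [h _].
  rewrite last_cat lal lastx // in h.
  by split => //; rewrite pe_cat lal.
have pe_sub : forall k e, e \in path_edges (v :: take k s2) -> e \in path_edges (v :: s2).
  by move=> k e; rewrite -{2}(cat_take_drop k s2) pe_cat mem_cat => ->.
have xs2 : forall k, (0 < k <= n)%N -> x k \in s2.
  by case=> [//|k] /andP[_ kn]; rewrite /x /=; apply: mem_nth.
have posq : forall u e gp, path_between E v0 u gp -> e \in E -> u \in e ->
    e \notin path_edges gp -> 1 <= q e u.
  move=> u e gp hgp eE ue ne.
  case: (eqVneq u v0) => [eu|nu]; first by subst u; rewrite qv0.
  have : u \in V :|: A by rewrite VAT inE.
  rewrite inE => /orP[uV|uA]; last by rewrite qa.
  by have [h _] := rootc u uV nu gp hgp; apply: h.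
have edE : forall j, (j < n)%N ->
    [set x j; x j.+1] \in E /\ [set x j; x j.+1] \in path_edges (v :: s2).
  move=> j jn.
  have hm : [set x j; x j.+1] \in path_edges (v :: s2).
    rewrite (mem_pe v); apply/existsP.
    have hj : (j < (size (v :: s2)).-1)%N by [].
    by exists (Ordinal hj).
  split => //.
  by case: pb => [[_ [/allP ha _]] _]; apply: ha.
have F1 : forall j, (j < n)%N -> 1 <= q [set x j; x j.+1] (x j).
  move=> j jn; have [hp he] := gpk j (ltnW jn).
  apply: (posq _ _ _ hp (edE j jn).1); first by rewrite !inE eqxx.
  have xin : x j.+1 \in [set x j; x j.+1] by rewrite !inE eqxx orbT.
  rewrite he mem_cat negb_or; apply/andP; split; apply/negP => hm.
    have := pe_endpoint hm xin; apply/negP; apply: disj; apply: xs2; slia.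
  have := pe_endpoint hm xin.
  change (v :: take j s2) with (take j.+1 (v :: s2)) => /index_ltn.
  by rewrite /x index_uniq ?ltnn //= ltnS.
have F2 : forall k e, (0 < k <= n)%N -> e \in E -> x k \in e ->
    e \notin path_edges (v :: s2) -> 1 <= q e (x k).
  move=> k e kn eE xe ne; have [hp he] := gpk k (ltac:(slia)).
  apply: (posq _ _ _ hp eE xe).
  rewrite he mem_cat negb_or; apply/andP; split; apply/negP => hm.
    by have := pe_endpoint hm xe; apply/negP; apply: disj; apply: xs2.
  by move/negP: ne; apply; apply: pe_sub hm.
have nie : forall i j, (i <= n)%N -> (j < n)%N ->
    (x i \in [set x j; x j.+1]) = (i == j) || (i == j.+1).
  by move=> i j hi hj; rewrite /x nth_in_edge.
have inV : forall k, (k <= n)%N -> x k \in V.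
  move=> k kn.
  case: (posnP k) => [->//|k0].
  case: (eqVneq k n) => [->|kn'].
    by case: pb => _ [_ /= h]; rewrite /x /n -(last_nth v) h.
  have : x k \in V :|: A by rewrite VAT inE.
  rewrite inE => /orP[//|xA].
  have := arr _ xA.
  have sub : [set [set x k.-1; x k]; [set x k; x k.+1]] \subset [set e in E | x k \in e].
    apply/subsetP => e; rewrite !inE => /orP[]/eqP ->; rewrite inE.
      have := (edE k.-1 ltac:(slia)).1; rewrite prednK // => -> /=.
      by rewrite !inE eqxx orbT.
    by rewrite (edE k ltac:(slia)).1 !inE eqxx.
  move/subset_leq_card: sub; rewrite cards2 => /[swap] ->.
  case: eqP => // he.
  have : x k.-1 \in [set x k; x k.+1] by rewrite -he !inE eqxx.
  rewrite nie; [slia|slia|slia].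
pose ed j := [set x j; x j.+1].
pose al' j := q (ed j) (x j).
pose be j := q (ed j) (x j.+1).
pose M k := Qpath E q (v :: s2) (x k).
have edne : forall j, (j.+1 < n)%N -> ed j != ed j.+1.
  move=> j jn; apply/eqP => h.
  have : x j \in ed j by rewrite !inE eqxx.
  by rewrite h /ed nie; slia.
have xkin : forall k, (k <= n)%N -> (k < size (v :: s2))%N by move=> k kn /=; slia.
have hL : forall j, (j < n)%N -> Qe E q (ed j) (x j) = if j == 0%N then M 0%N else be j.-1 * M j.
  case=> [|j] jn.
    apply: Qe_L1 => e eE xe; rewrite (edge_at up _ xe) //=.
    by rewrite ltnS n0.
  rewrite /be /M /Qpath; apply: (Qe_L2 q (edE j ltac:(slia)).1).
  - by rewrite !inE eqxx orbT.
  - exact: edne.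
  move=> e eE xe; rewrite (edge_at up (xkin j.+1 (ltnW jn)) xe).
  have -> : (j.+2 < size (v :: s2))%N by rewrite hsz ltnS.
  rewrite andTb andTb orbC.
  done.
have hU : forall j, (j < n)%N ->
    Qe E q (ed j) (x j.+1) = if j.+1 == n then M n else al' j.+1 * M j.+1.
  move=> j jn.
  case: eqP => [jn'|/eqP jn'].
    rewrite -jn'.
    apply: Qe_L1 => e eE xe.
    rewrite (edge_at up (xkin _ jn) xe).
    have -> : (j.+2 < size (v :: s2))%N = false by rewrite hsz ltnS -jn' ltnn.
    by rewrite andFb orbF andTb.
  rewrite /al' /M /Qpath.
  apply: (Qe_L2 q (edE j.+1 ltac:(slia)).1).
  - by rewrite !inE eqxx.
  - rewrite eq_sym; apply: edne; slia.
  move=> e eE xe; rewrite (edge_at up (xkin _ jn) xe).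
  have -> : (j.+2 < size (v :: s2))%N by rewrite hsz ltnS; slia.
  by rewrite andTb andTb.
have hdet : forall j, (j < n)%N -> det_edge E q (x j) (x j.+1) =
    al' j * be j - (if j == 0%N then M 0%N else be j.-1 * M j) *
      (if j.+1 == n then M n else al' j.+1 * M j.+1).
  by move=> j jn; rewrite /det_edge -/(ed j) hL // hU.
have hint : interior (v :: s2) = [seq x k | k <- index_iota 1 n].
  rewrite /interior /= drop0 /index_iota.
  apply: (@eq_from_nth _ v).
    by rewrite size_map size_iota size_takel; slia.
  move=> i; rewrite size_takel; last slia.
  move=> hi; rewrite nth_take; last slia.
  by rewrite (nth_map 0%N) ?size_iota; [rewrite nth_iota // /x add1n|slia].
have hdp : det_path E q v (v :: s2) =
    al' 0%N * be n.-1 - (\prod_(1 <= k < n) M k) ^+ 2 * M 0%N * M n.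
  rewrite /det_path /Qstar hint big_map.
  rewrite /be /al' /ed prednK //.
have halp : forall j, (j < n)%N -> 0 < al' j.
  by move=> j jn; exact: (lt_le_trans ltr01 (F1 j jn)).
have hMp : forall k, (0 < k <= n)%N -> 0 < M k.
  move=> k kn; rewrite /M /Qpath; apply: prodr_gt0 => e /andP[eE /andP[xe ne]].
  exact: (lt_le_trans ltr01 (F2 k e kn eE xe ne)).
have hE : forall j, (j < n)%N -> [set x j; x j.+1] \in E by move=> j jn; exact: (edE j jn).1.
split.
  move=> nd; rewrite hdp.
  apply: (@arith n al' be M (M 0%N)) => // j jn.
  rewrite -hdet //; apply: nd; [apply: inV; slia|apply: inV; slia|exact: hE].
move=> pd.
have := (@arith n al' (fun j => - be j) M (- M 0%N) n0 halp hMp).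
rewrite hdp.
have -> : al' 0%N * - be n.-1 - (\prod_(1 <= k < n) M k) ^+ 2 * - M 0%N * M n =
   - (al' 0%N * be n.-1 - (\prod_(1 <= k < n) M k) ^+ 2 * M 0%N * M n) by ring.
rewrite oppr_lt0; apply => j jn.
have -> : al' j * - be j - (if j == 0%N then - M 0%N else - be j.-1 * M j) *
      (if j.+1 == n then M n else al' j.+1 * M j.+1) =
    - (al' j * be j - (if j == 0%N then M 0%N else be j.-1 * M j) *
      (if j.+1 == n then M n else al' j.+1 * M j.+1)).
  by case: (j == 0%N); ring.
rewrite oppr_lt0 -hdet //; apply: pd; [apply: inV; slia|apply: inV; slia|exact: hE].
Qed.
End Main.

Unset Implicit Arguments.
Set Strict Implicit.
Set Printing Implicit Defensive.

Theorem proposition5p7 (T : finType) (V A : {set T}) (E : {set {set T}})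
  (f : T -> int) (q : {set T} -> T -> int) (v0 : T) (v w : T) :
  decorated_rooted_tree E q V A v0 ->
  v \in V -> w \in V ->
  tree_lt E v0 v w \/ tree_lt E v0 w v ->
  (negative_determinants E q V ->
     forall p, path_between E v w p -> det_path E q v p < 0) /\
  (positive_determinants E q V ->
     forall p, path_between E v w p -> det_path E q v p > 0).
Proof.
move=> H vV wV [lt|lt].
  by split=> nd p pb; [apply: (main_lt H vV wV lt pb).1 | apply: (main_lt H vV wV lt pb).2].
have key : forall p, path_between E v w p ->
    det_path E q v p = det_path E q w (rev p) /\ path_between E w v (rev p).
  move=> p pb; split; last exact: pb_rev.
  case: p pb => [[[]]//|a t] pb.
  case/lastP: t pb => [|s b] pb.
    by case: pb => _ [/= h1 h2]; case: lt => /eqP; rewrite -h1 -h2.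
  exact: det_path_rev.
split=> nd p pb; have [-> pb'] := key p pb.
  exact: (main_lt H wV vV lt pb').1.
exact: (main_lt H wV vV lt pb').2.
Qed.
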